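(* Let $\mathcal{A}=(\mathcal{E},\{M_i\}_{i\in\mathcal{O}})$ be a quantum decision model with Kraus form $\mathcal{E}(\rho)=\sum_jE_j\rho E_j^\dagger$. (1) The Lipschitz constant of $\mathcal{A}$ is \[K^*=\max_{A\subseteq\mathcal{O}}\big[\lambda_{\max}(M_A)-\lambda_{\min}(M_A)\big],\qquad M_A=\sum_{i\in A}\mathcal{E}^\dagger(M_i^\dagger M_i),\] where $\mathcal{E}^\dagger(X)=\sum_jE_j^\dagger XE_j$ and $\lambda_{\max},\lambda_{\min}$ denote the largest and smallest eigenvalues of the positive semidefinite matrix $M_A$ (with $M_\emptyset=0$). (2) Let $A^*\subseteq\mathcal{O}$ attain this maximum, and let $|\psi\rangle,|\phi\rangle$ be normalized eigenvectors of $M_{A^*}$ for its largest and smallest eigenvalues respectively (chosen mutually orthogonal). Then, with $\psi=|\psi\rangle\langle\psi|$ and $\phi=|\phi\rangle\langle\phi|$, \[ d(\mathcal{A}(\psi),\mathcal{A}(\phi))=K^*D(\psi,\phi)=K^*. \]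
   Context: $\mathcal{H}$ is a Hilbert space of finite dimension $N$, $\mathcal{D}(\mathcal{H})$ its density matrices. A quantum decision model $\mathcal{A}=(\mathcal{E},\{M_i\}_{i\in\mathcal{O}})$ consists of a completely positive trace-preserving map $\mathcal{E}$ and a measurement $\{M_i\}_{i\in\mathcal{O}}$ ($\mathcal{O}$ finite, $\sum_iM_i^\dagger M_i=I$) and maps $\rho$ to $\mathcal{A}(\rho)=\{\mathrm{tr}(M_i\mathcal{E}(\rho)M_i^\dagger)\}_{i\in\mathcal{O}}$. $D(\rho,\sigma)=\frac12\mathrm{tr}|\rho-\sigma|$; $d(p,q)=\frac12\sum_i|p_i-q_i|$. The Lipschitz constant $K^*$ of $\mathcal{A}$ is the smallest $K\ge0$ with $d(\mathcal{A}(\rho),\mathcal{A}(\sigma))\le KD(\rho,\sigma)$ for all $\rho,\sigma\in\mathcal{D}(\mathcal{H})$. *)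

(* Defs.v *)
(* Scalars: an arbitrary numClosedFieldType C (e.g. the
   complex numbers), matrices 'M[C]_N represent operators on H = C^N. *)
From HB Require Import structures.
From mathcomp Require Import all_boot all_order all_algebra.
Set Implicit Arguments. Unset Strict Implicit. Unset Printing Implicit Defensive.
Import Order.TTheory GRing.Theory Num.Theory.
Local Open Scope ring_scope.

Section QDM.
Variable C : numClosedFieldType.

Definition adj m n (X : 'M[C]_(m, n)) : 'M[C]_(n, m) := map_mx Num.conj (X^T).

Definition is_density N (rho : 'M[C]_N) : Prop :=
  [/\ adj rho = rho,
      (forall v : 'cV[C]_N, 0 <= (adj v *m rho *m v) 0 0)
    & \tr rho = 1].

(* |X| by functional calculus from the spectral decomposition
   X = P^-1 diag(lambda) P (meaningful for normal, e.g. Hermitian, X) *)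
Definition absmx N (X : 'M[C]_N) : 'M[C]_N :=
  invmx (spectralmx X) *m diag_mx (map_mx (fun z => `|z|) (spectral_diag X))
    *m spectralmx X.

Definition trace_dist N (rho sigma : 'M[C]_N) : C :=
  2^-1 * \tr (absmx (rho - sigma)).

Definition tv_dist (O : finType) (p q : O -> C) : C :=
  2^-1 * \sum_(i : O) `|p i - q i|.

Definition kraus_TP N m (E : 'I_m -> 'M[C]_N) : Prop :=
  \sum_(j < m) adj (E j) *m E j = 1%:M.

Definition kraus_map N m (E : 'I_m -> 'M[C]_N) (rho : 'M[C]_N) : 'M[C]_N :=
  \sum_(j < m) E j *m rho *m adj (E j).

Definition kraus_dual N m (E : 'I_m -> 'M[C]_N) (X : 'M[C]_N) : 'M[C]_N :=
  \sum_(j < m) adj (E j) *m X *m E j.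

Definition is_measurement N (O : finType) (M : O -> 'M[C]_N) : Prop :=
  \sum_(i : O) adj (M i) *m M i = 1%:M.

Definition qdm N m (O : finType) (E : 'I_m -> 'M[C]_N) (M : O -> 'M[C]_N)
  (rho : 'M[C]_N) : O -> C :=
  fun i => \tr (M i *m kraus_map E rho *m adj (M i)).

Definition lipschitz_for N m (O : finType) (E : 'I_m -> 'M[C]_N)
  (M : O -> 'M[C]_N) (K : C) : Prop :=
  forall rho sigma : 'M[C]_N, is_density rho -> is_density sigma ->
    tv_dist (qdm E M rho) (qdm E M sigma) <= K * trace_dist rho sigma.

Definition is_lipschitz_constant N m (O : finType) (E : 'I_m -> 'M[C]_N)
  (M : O -> 'M[C]_N) (K : C) : Prop :=
  [/\ 0 <= K, lipschitz_for E M K &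
      forall K', 0 <= K' -> lipschitz_for E M K' -> K <= K'].

(* eigenvalues (with multiplicity) of a normal matrix, from the spectral
   theorem; largest and smallest of them (real for Hermitian matrices) *)
Definition eigvals N (X : 'M[C]_N) : seq C :=
  [seq spectral_diag X 0 i | i <- enum 'I_N].

Definition lambda_max N (X : 'M[C]_N) : C :=
  \big[Num.max/(eigvals X)`_0]_(x <- eigvals X) x.

Definition lambda_min N (X : 'M[C]_N) : C :=
  \big[Num.min/(eigvals X)`_0]_(x <- eigvals X) x.

Definition M_set N m (O : finType) (E : 'I_m -> 'M[C]_N) (M : O -> 'M[C]_N)
  (A : {set O}) : 'M[C]_N :=
  \sum_(i in A) kraus_dual E (adj (M i) *m M i).

(* max over A subset O of lambda_max(M_A) - lambda_min(M_A)
   (all these values are >= 0, so 0 is a neutral start) *)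
Definition Kformula N m (O : finType) (E : 'I_m -> 'M[C]_N)
  (M : O -> 'M[C]_N) : C :=
  \big[Num.max/0]_(A : {set O})
     (lambda_max (M_set E M A) - lambda_min (M_set E M A)).

Definition proj_ket N (v : 'cV[C]_N) : 'M[C]_N := v *m adj v.

End QDM.

(* Main.v *)
Require Import Defs.
From HB Require Import structures.
From mathcomp Require Import all_boot all_order all_algebra.
From mathcomp Require Import spectral.
Import Order.TTheory GRing.Theory Num.Theory.
Local Open Scope ring_scope.
Set Implicit Arguments. Unset Strict Implicit.
Section Basics.
Variable C : numClosedFieldType.

Lemma adjE m n (X : 'M[C]_(m, n)) i j : adj X i j = (X j i)^*.
Proof. by rewrite /adj !mxE. Qed.

Lemma adjM m n p (A : 'M[C]_(m, n)) (B : 'M[C]_(n, p)) :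
  adj (A *m B) = adj B *m adj A.
Proof. by rewrite /adj trmx_mul map_mxM. Qed.

Lemma adjK m n (A : 'M[C]_(m, n)) : adj (adj A) = A.
Proof. by apply/matrixP => i j; rewrite !adjE conjCK. Qed.

Lemma adjD m n (A B : 'M[C]_(m, n)) : adj (A + B) = adj A + adj B.
Proof. by apply/matrixP => i j; rewrite !mxE rmorphD. Qed.

Lemma adjB m n (A B : 'M[C]_(m, n)) : adj (A - B) = adj A - adj B.
Proof. by apply/matrixP => i j; rewrite !mxE rmorphB. Qed.

Lemma adj_sum m n I (r : seq I) (P : pred I) (F : I -> 'M[C]_(m, n)) :
  adj (\sum_(i <- r | P i) F i) = \sum_(i <- r | P i) adj (F i).
Proof.
elim/big_rec2: _ => [|i x y _ <-]; last by rewrite adjD.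
by apply/matrixP => i j; rewrite !mxE rmorph0.
Qed.

Lemma adj1 n : adj (1%:M : 'M[C]_n) = 1%:M.
Proof. by apply/matrixP => i j; rewrite !mxE eq_sym rmorph_nat. Qed.

Lemma adjZ m n a (A : 'M[C]_(m, n)) : adj (a *: A) = a^* *: adj A.
Proof. by apply/matrixP => i j; rewrite !mxE rmorphM. Qed.

Lemma tr_adj n (A : 'M[C]_n) : \tr (adj A) = (\tr A)^*.
Proof. by rewrite /mxtrace rmorph_sum; apply: eq_bigr => i _; rewrite adjE. Qed.

Lemma herm_diag_real n (Y : 'M[C]_n) i : adj Y = Y -> Y i i \is Num.real.
Proof. by move=> hY; rewrite CrealE -adjE hY. Qed.

Lemma herm_tr_real n (X Y : 'M[C]_n) : adj X = X -> adj Y = Y ->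
  \tr (X *m Y) \is Num.real.
Proof.
by move=> hX hY; rewrite CrealE -tr_adj adjM hX hY mxtrace_mulC.
Qed.

Lemma spec_herm n (X : 'M[C]_n) : adj X = X ->
  [/\ X = adj (spectralmx X) *m diag_mx (spectral_diag X) *m spectralmx X,
      spectralmx X *m adj (spectralmx X) = 1%:M &
      adj (spectralmx X) *m spectralmx X = 1%:M].
Proof.
move=> hX.
have nX : X \is normalmx by apply/normalmxP; change (X *m adj X = adj X *m X); rewrite hX.
have U1 : spectralmx X *m adj (spectralmx X) = 1%:M
  by apply/unitarymxP/spectral_unitarymx.
split => //; last exact: mulmx1C.
have -> : adj (spectralmx X) = invmx (spectralmx X)
  by rewrite invmx_unitary ?spectral_unitarymx.
exact/orthomx_spectralP.
Qed.

Lemma spec_diag n (X : 'M[C]_n) : adj X = X ->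
  diag_mx (spectral_diag X) = spectralmx X *m X *m adj (spectralmx X).
Proof.
move=> hX; case: (spec_herm hX).
set U := spectralmx X; set d := spectral_diag X => hXe h1 h2.
by rewrite hXe !mulmxA h1 mul1mx -mulmxA h1 mulmx1.
Qed.

Lemma eig_real n (X : 'M[C]_n) k : adj X = X -> spectral_diag X 0 k \is Num.real.
Proof.
move=> hX; have := congr1 (fun Y : 'M[C]_n => Y k k) (spec_diag hX).
rewrite /= mxE eqxx mulr1n => ->; apply: herm_diag_real.
by rewrite !adjM adjK hX mulmxA.
Qed.

End Basics.

Section Big.
Variable C : numClosedFieldType.
Variables (I : eqType) (P : pred I) (f : I -> C) (x0 : C).
Hypothesis x0r : x0 \is Num.real.
Hypothesis fr : forall i, P i -> f i \is Num.real.

Lemma qbigmax_real r : \big[Num.max/x0]_(i <- r | P i) f i \is Num.real.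
Proof. by elim/big_ind: _ => // x y hx hy; apply: max_real. Qed.

Lemma qbigmin_real r : \big[Num.min/x0]_(i <- r | P i) f i \is Num.real.
Proof. by elim/big_ind: _ => // x y hx hy; apply: min_real. Qed.

Lemma qbigmax_ge r i : i \in r -> P i -> f i <= \big[Num.max/x0]_(j <- r | P j) f j.
Proof.
elim: r => // j r IH; rewrite inE big_cons => /orP[/eqP<-|ir] Pi.
  by rewrite Pi; case: (real_leP (fr Pi) (qbigmax_real r)) => // /ltW.
case: ifP => Pj; last exact: IH.
have := IH ir Pi; case: (real_leP (fr Pj) (qbigmax_real r)) => // h h2.
exact: le_trans h2 (ltW h).
Qed.

Lemma qbigmax_ge0 r : x0 <= \big[Num.max/x0]_(j <- r | P j) f j.
Proof.
elim: r => [|j r IH]; first by rewrite big_nil.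
rewrite big_cons; case: ifP => Pj //.
case: (real_leP (fr Pj) (qbigmax_real r)) => // h.
exact: le_trans IH (ltW h).
Qed.

Lemma qbigmin_le r i : i \in r -> P i -> \big[Num.min/x0]_(j <- r | P j) f j <= f i.
Proof.
elim: r => // j r IH; rewrite inE big_cons => /orP[/eqP<-|ir] Pi.
  by rewrite Pi; case: (real_leP (fr Pi) (qbigmin_real r)) => // /ltW.
case: ifP => Pj; last exact: IH.
have := IH ir Pi; case: (real_leP (fr Pj) (qbigmin_real r)) => h h2 //.
exact: le_trans h h2.
Qed.

Lemma qbigmin_le0 r : \big[Num.min/x0]_(j <- r | P j) f j <= x0.
Proof.
elim: r => [|j r IH]; first by rewrite big_nil.
rewrite big_cons; case: ifP => Pj //.
case: (real_leP (fr Pj) (qbigmin_real r)) => h //.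
exact: le_trans h IH.
Qed.

Lemma qbigmax_att r : \big[Num.max/x0]_(j <- r | P j) f j = x0 \/
  exists2 i, i \in r & P i /\ \big[Num.max/x0]_(j <- r | P j) f j = f i.
Proof.
elim: r => [|j r IH]; first by left; rewrite big_nil.
rewrite big_cons; case: ifP => Pj.
  case: (real_leP (fr Pj) (qbigmax_real r)) => _.
    case: IH => [->|[i ir hi]]; [by left|right; exists i => //].
    by rewrite inE ir orbT.
  by right; exists j; rewrite ?inE ?eqxx.
case: IH => [->|[i ir hi]]; [by left|right; exists i => //].
by rewrite inE ir orbT.
Qed.

Lemma qbigmin_att r : \big[Num.min/x0]_(j <- r | P j) f j = x0 \/
  exists2 i, i \in r & P i /\ \big[Num.min/x0]_(j <- r | P j) f j = f i.
Proof.
elim: r => [|j r IH]; first by left; rewrite big_nil.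
rewrite big_cons; case: ifP => Pj.
  case: (real_leP (fr Pj) (qbigmin_real r)) => _.
    by right; exists j; rewrite ?inE ?eqxx.
  case: IH => [->|[i ir hi]]; [by left|right; exists i => //].
  by rewrite inE ir orbT.
case: IH => [->|[i ir hi]]; [by left|right; exists i => //].
by rewrite inE ir orbT.
Qed.
End Big.

Section Scal.
Variable C : numClosedFieldType.

Lemma half2 (s : C) : 2^-1 * (s *+ 2) = s.
Proof.
by rewrite -(mulr_natl s 2) mulrA mulVf ?mul1r // pnatr_eq0.
Qed.

Lemma half_ge0 : 0 <= (2 : C)^-1.
Proof. by rewrite invr_ge0 ler0n. Qed.

Variables (O : finType) (x : O -> C).
Hypothesis xr : forall i, x i \is Num.real.
Hypothesis xs : \sum_i x i = 0.

Lemma split_sum (A : {set O}) (F : O -> C) :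
  \sum_i F i = \sum_(i in A) F i + \sum_(i in ~: A) F i.
Proof.
rewrite (bigID (mem A)) /=; congr (_ + _); apply: eq_bigl => i.
by rewrite in_setC.
Qed.

Lemma tv_le (A : {set O}) : \sum_(i in A) x i <= 2^-1 * \sum_i `|x i|.
Proof.
have e : \sum_(i in ~: A) x i = - \sum_(i in A) x i.
  by apply/eqP; rewrite -addr_eq0 addrC -split_sum xs.
rewrite -[leLHS]half2; apply: ler_wpM2l; first exact: half_ge0.
rewrite (split_sum A) mulr2n; apply: lerD; first by apply: ler_sum => i _; exact: real_ler_norm.
rewrite -[X in X <= _]opprK -e -sumrN; apply: ler_sum => i _; rewrite -normrN; apply: real_ler_norm.
by rewrite realN.
Qed.

Lemma tv_eq : exists A : {set O}, 2^-1 * \sum_i `|x i| = \sum_(i in A) x i.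
Proof.
exists [set i | 0 <= x i].
set A := [set i | 0 <= x i].
have e : \sum_(i in ~: A) x i = - \sum_(i in A) x i.
  by apply/eqP; rewrite -addr_eq0 addrC -split_sum xs.
rewrite -[RHS]half2; congr (_ * _).
rewrite (split_sum A) mulr2n; congr (_ + _).
  by apply: eq_bigr => i; rewrite inE => /ger0_norm.
rewrite -[RHS]opprK -e -sumrN; apply: eq_bigr => i; rewrite !inE => h.
by rewrite ltr0_norm // real_ltNge ?h.
Qed.
End Scal.

Lemma sbound (C : numClosedFieldType) n (a d : 'I_n -> C) lo hi :
  (forall k, d k \is Num.real) -> (forall k, lo <= a k) -> (forall k, a k <= hi) ->
  \sum_k d k = 0 ->
  \sum_k a k * d k <= (hi - lo) * (2^-1 * \sum_k `|d k|).
Proof.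
move=> dr alo ahi ds.
have e : \sum_k a k * d k = \sum_k (a k - lo) * d k.
  by symmetry; rewrite (eq_bigr _ (fun k _ => mulrBl _ _ _)) sumrB -mulr_sumr ds mulr0 subr0.
rewrite e mulrCA; rewrite -[leLHS]half2; apply: ler_wpM2l; first exact: half_ge0.
have -> : \sum_k `|d k| = \sum_k (d k + `|d k|) by rewrite big_split /= ds add0r.
rewrite mulr_sumr -sumrMnl; apply: ler_sum => k _.
have h1 : 0 <= a k - lo by rewrite subr_ge0.
case: (real_ge0P (dr k)) => hd.
  rewrite -mulr2n -mulrnAr; apply: ler_wpM2r; first exact: mulrn_wge0.
  by rewrite lerD2r.
by rewrite subrr mulr0; apply: mulrn_wle0; apply: mulr_ge0_le0 => //; apply: ltW.
Qed.

Section Mat.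
Variable C : numClosedFieldType.

Lemma row_quad n p (A : 'M[C]_(p, n)) (B : 'M[C]_n) k :
  (row k A *m B *m adj (row k A)) 0 0 = (A *m B *m adj A) k k.
Proof.
rewrite -row_mul !mxE; apply: eq_bigr => j _; rewrite !mxE.
congr (_ * _); apply: eq_bigr => l _; rewrite !mxE //.
Qed.

Lemma row_norm1 n (U : 'M[C]_n) k : U *m adj U = 1%:M ->
  row k U *m adj (row k U) = 1%:M.
Proof.
move=> h; apply/matrixP => i j; rewrite !ord1.
have := row_quad U 1%:M k; rewrite !mulmx1 h => ->.
by rewrite !mxE !eqxx.
Qed.

Lemma entry_quad n (b : 'rV[C]_n) (d : 'rV[C]_n) :
  (b *m diag_mx d *m adj b) 0 0 = \sum_k d 0 k * `|b 0 k| ^+ 2.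
Proof.
rewrite mul_mx_diag !mxE; apply: eq_bigr => k _; rewrite !mxE normCK.
by rewrite mulrAC mulrC.
Qed.

Lemma entry_norm n (b : 'rV[C]_n) :
  (b *m adj b) 0 0 = \sum_k `|b 0 k| ^+ 2.
Proof. by rewrite mxE; apply: eq_bigr => k _; rewrite !mxE normCK. Qed.

Lemma trace_conj n (U Y : 'M[C]_n) : U *m adj U = 1%:M ->
  \tr (adj U *m Y *m U) = \tr Y.
Proof. by move=> h; rewrite mxtrace_mulC mulmxA h mul1mx. Qed.

Lemma nth0_real (s : seq C) : (forall x, x \in s -> x \is Num.real) ->
  s`_0 \is Num.real.
Proof. by case: s => [|x s] h //=; apply: h; rewrite inE eqxx. Qed.

Lemma eigvals_real n (X : 'M[C]_n) : adj X = X ->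
  forall x, x \in eigvals X -> x \is Num.real.
Proof. by move=> hX x /mapP[k _ ->]; apply: eig_real. Qed.

Lemma lmaxE n (X : 'M[C]_n) : lambda_max X =
  \big[Num.max/(eigvals X)`_0]_(k <- enum 'I_n) spectral_diag X 0 k.
Proof. by rewrite /lambda_max /eigvals big_map. Qed.

Lemma lminE n (X : 'M[C]_n) : lambda_min X =
  \big[Num.min/(eigvals X)`_0]_(k <- enum 'I_n) spectral_diag X 0 k.
Proof. by rewrite /lambda_min /eigvals big_map. Qed.

Lemma lmax_ge n (X : 'M[C]_n) k : adj X = X -> spectral_diag X 0 k <= lambda_max X.
Proof.
move=> hX; rewrite lmaxE; apply: (qbigmax_ge (P := xpredT)).
- by apply: nth0_real; apply: eigvals_real.
- by move=> i _; apply: eig_real.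
- by rewrite mem_enum.
- by [].
Qed.

Lemma lmin_le n (X : 'M[C]_n) k : adj X = X -> lambda_min X <= spectral_diag X 0 k.
Proof.
move=> hX; rewrite lminE; apply: (qbigmin_le (P := xpredT)).
- by apply: nth0_real; apply: eigvals_real.
- by move=> i _; apply: eig_real.
- by rewrite mem_enum.
- by [].
Qed.

Lemma lmax_real n (X : 'M[C]_n) : adj X = X -> lambda_max X \is Num.real.
Proof.
move=> hX; rewrite lmaxE; apply: (qbigmax_real (P := xpredT)).
- by apply: nth0_real; apply: eigvals_real.
- by move=> i _; apply: eig_real.
Qed.

Lemma lmin_real n (X : 'M[C]_n) : adj X = X -> lambda_min X \is Num.real.
Proof.
move=> hX; rewrite lminE; apply: (qbigmin_real (P := xpredT)).
- by apply: nth0_real; apply: eigvals_real.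
- by move=> i _; apply: eig_real.
Qed.

Lemma nth0_in n (X : 'M[C]_n) : (0 < n)%N -> (eigvals X)`_0 \in eigvals X.
Proof. by move=> hn; apply: mem_nth; rewrite size_map size_enum_ord. Qed.

Lemma lmax_att n (X : 'M[C]_n) : (0 < n)%N -> adj X = X ->
  exists k, lambda_max X = spectral_diag X 0 k.
Proof.
move=> hn hX; rewrite lmaxE.
case: (qbigmax_att (P := xpredT) (f := fun k => spectral_diag X 0 k)
   (x0 := (eigvals X)`_0) _ _ (enum 'I_n)).
- by apply: nth0_real; apply: eigvals_real.
- by move=> i _; apply: eig_real.
- by move=> ->; have /mapP[k _ ->] := nth0_in X hn; exists k.
- by move=> [k _ [_ ->]]; exists k.
Qed.

Lemma lmin_att n (X : 'M[C]_n) : (0 < n)%N -> adj X = X ->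
  exists k, lambda_min X = spectral_diag X 0 k.
Proof.
move=> hn hX; rewrite lminE.
case: (qbigmin_att (P := xpredT) (f := fun k => spectral_diag X 0 k)
   (x0 := (eigvals X)`_0) _ _ (enum 'I_n)).
- by apply: nth0_real; apply: eigvals_real.
- by move=> i _; apply: eig_real.
- by move=> ->; have /mapP[k _ ->] := nth0_in X hn; exists k.
- by move=> [k _ [_ ->]]; exists k.
Qed.

Lemma rayleigh n (X : 'M[C]_n) (c : 'rV[C]_n) : adj X = X ->
  c *m adj c = 1%:M ->
  lambda_min X <= (c *m X *m adj c) 0 0 <= lambda_max X.
Proof.
move=> hX hc; case: (spec_herm hX).
set U := spectralmx X; set d := spectral_diag X => hXe h1 h2.
set b := c *m adj U.
have e : c *m X *m adj c = b *m diag_mx d *m adj b.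
  by rewrite [in LHS]hXe /b adjM adjK !mulmxA.
have nb : \sum_k `|b 0 k| ^+ 2 = 1.
  rewrite -entry_norm /b adjM adjK !mulmxA -[c *m _ *m _]mulmxA h2 mulmx1 hc.
  by rewrite mxE.
rewrite e entry_quad; apply/andP; split.
  rewrite -[leLHS]mulr1 -nb mulr_sumr; apply: ler_sum => k _.
  by rewrite mulrC [X in _ <= X]mulrC; apply: ler_wpM2l; [apply: exprn_ge0 | apply: lmin_le].
rewrite -[leRHS]mulr1 -nb mulr_sumr; apply: ler_sum => k _.
by rewrite mulrC [X in _ <= X]mulrC; apply: ler_wpM2l; [apply: exprn_ge0 | apply: lmax_ge].
Qed.

Lemma tr_abs n (D : 'M[C]_n) : adj D = D ->
  \tr (absmx D) = \sum_k `|spectral_diag D 0 k|.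
Proof.
move=> hD; case: (spec_herm hD) => _ h1 _.
rewrite /absmx.
have -> : invmx (spectralmx D) = adj (spectralmx D)
  by rewrite invmx_unitary ?spectral_unitarymx.
by rewrite trace_conj // mxtrace_diag; apply: eq_bigr => k _; rewrite mxE.
Qed.

Lemma tr_abs_ge0 n (D : 'M[C]_n) : adj D = D -> 0 <= \tr (absmx D).
Proof. by move=> hD; rewrite tr_abs //; apply: sumr_ge0 => k _. Qed.

Lemma trace_bound n (X D : 'M[C]_n) : adj X = X -> adj D = D -> \tr D = 0 ->
  \tr (X *m D) <= (lambda_max X - lambda_min X) * (2^-1 * \tr (absmx D)).
Proof.
move=> hX hD trD; rewrite tr_abs //.
case: (spec_herm hD).
set U := spectralmx D; set d := spectral_diag D => hDe h1 h2.
have ds : \sum_k d 0 k = 0.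
  by have := trD; rewrite {1}hDe trace_conj // mxtrace_diag.
have -> : \tr (X *m D) = \sum_k (U *m X *m adj U) k k * d 0 k.
  rewrite [in LHS]hDe !mulmxA mxtrace_mulC !mulmxA mul_mx_diag /mxtrace.
  by apply: eq_bigr => k _; rewrite mxE.
apply: sbound => [k|k|k|//]; first exact: eig_real.
  by rewrite -row_quad; case/andP: (rayleigh hX (row_norm1 k h1)).
by rewrite -row_quad; case/andP: (rayleigh hX (row_norm1 k h1)).
Qed.

End Mat.

Section QD.
Variable C : numClosedFieldType.
Variables (N m : nat) (E : 'I_m -> 'M[C]_N) (O : finType) (M : O -> 'M[C]_N).

Lemma tr_sum I (r : seq I) (P : pred I) (A : I -> 'M[C]_N) :
  \tr (\sum_(i <- r | P i) A i) = \sum_(i <- r | P i) \tr (A i).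
Proof. exact: raddf_sum. Qed.

Lemma tr_B (A B : 'M[C]_N) : \tr (A - B) = \tr A - \tr B.
Proof. exact: raddfB. Qed.

Definition F i := kraus_dual E (adj (M i) *m M i).

Lemma qdm_tr rho i : qdm E M rho i = \tr (F i *m rho).
Proof.
rewrite /qdm /kraus_map /F /kraus_dual mulmx_sumr mulmx_suml mulmx_suml !tr_sum.
apply: eq_bigr => j _.
by rewrite mxtrace_mulC !mulmxA mxtrace_mulC !mulmxA.
Qed.

Lemma F_herm i : adj (F i) = F i.
Proof.
rewrite /F /kraus_dual adj_sum; apply: eq_bigr => j _; by rewrite !adjM !adjK !mulmxA.
Qed.

Lemma sumF : kraus_TP E -> is_measurement M -> \sum_i F i = 1%:M.
Proof.
move=> hE hM; rewrite /F /kraus_dual exchange_big /= -hE; apply: eq_bigr => j _.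
by rewrite -mulmx_suml -mulmx_sumr hM mulmx1.
Qed.

Lemma Mset_herm (A : {set O}) : adj (M_set E M A) = M_set E M A.
Proof. by rewrite /M_set adj_sum; apply: eq_bigr => i _; apply: F_herm. Qed.

Lemma sum_tr_set (A : {set O}) (D : 'M[C]_N) :
  \sum_(i in A) \tr (F i *m D) = \tr (M_set E M A *m D).
Proof. by rewrite /M_set mulmx_suml tr_sum. Qed.

Lemma x_sum (D : 'M[C]_N) : kraus_TP E -> is_measurement M ->
  \sum_i \tr (F i *m D) = \tr D.
Proof. by move=> hE hM; rewrite -tr_sum -mulmx_suml sumF // mul1mx. Qed.

Lemma tv_x rho sigma : tv_dist (qdm E M rho) (qdm E M sigma) =
  2^-1 * \sum_i `|\tr (F i *m (rho - sigma))|.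
Proof.
rewrite /tv_dist; congr (_ * _); apply: eq_bigr => i _.
by rewrite !qdm_tr mulmxBr tr_B.
Qed.

Definition Kval (A : {set O}) := lambda_max (M_set E M A) - lambda_min (M_set E M A).

Lemma Kval_real (A : {set O}) : Kval A \is Num.real.
Proof. by rewrite /Kval realB ?lmax_real ?lmin_real ?Mset_herm. Qed.

Lemma KformulaE : Kformula E M = \big[Num.max/0]_(A : {set O}) Kval A.
Proof. by []. Qed.

Lemma K_ge (A : {set O}) : Kval A <= Kformula E M.
Proof.
rewrite KformulaE; apply: (qbigmax_ge (P := xpredT)) => //.
- by move=> B _; apply: Kval_real.
- by rewrite mem_index_enum.
Qed.

Lemma K_ge0 : 0 <= Kformula E M.
Proof.
rewrite KformulaE; apply: (qbigmax_ge0 (P := xpredT)) => //.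
by move=> B _; apply: Kval_real.
Qed.

Lemma K_att : Kformula E M = 0 \/ exists A, Kformula E M = Kval A.
Proof.
rewrite KformulaE.
case: (qbigmax_att (P := xpredT) (f := Kval) (x0 := 0) _ _ (index_enum _)) => //.
- by move=> B _; apply: Kval_real.
- by left.
- by move=> [A _ [_ ->]]; right; exists A.
Qed.

Lemma dens_herm (rho : 'M[C]_N) : is_density rho -> adj rho = rho.
Proof. by case. Qed.

Lemma dens_tr (rho : 'M[C]_N) : is_density rho -> \tr rho = 1.
Proof. by case. Qed.

Lemma lip rho sigma : kraus_TP E -> is_measurement M ->
  is_density rho -> is_density sigma ->
  tv_dist (qdm E M rho) (qdm E M sigma) <= Kformula E M * trace_dist rho sigma.
Proof.
move=> hE hM hr hs; set D := rho - sigma.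
have hD : adj D = D by rewrite /D adjB !dens_herm.
have tD : \tr D = 0 by rewrite /D tr_B !dens_tr // subrr.
rewrite tv_x -/D.
have [A ->] := tv_eq (x := fun i => \tr (F i *m D))
   (fun i => herm_tr_real (F_herm i) hD) (etrans (x_sum D hE hM) tD).
rewrite sum_tr_set; apply: le_trans (trace_bound (Mset_herm A) hD tD) _.
apply: ler_wpM2r; last exact: K_ge.
by apply: mulr_ge0; [apply: half_ge0 | apply: tr_abs_ge0].
Qed.

End QD.

Section P2.
Variable C : numClosedFieldType.

Lemma adj0 p q : adj (0 : 'M[C]_(p, q)) = 0.
Proof. by apply/matrixP => i j; rewrite !mxE rmorph0. Qed.

Lemma cube_abs (z : C) : z * z * z = z -> `|z| = z * z.
Proof.
move=> h.
have : z * (z * z - 1) = 0 by rewrite mulrBr mulr1 mulrA h subrr.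
move/eqP; rewrite mulf_eq0 => /orP[/eqP->|]; first by rewrite normr0 mulr0.
rewrite subr_eq0 => /eqP zz; rewrite zz.
have : `|z| ^+ 2 == 1 by rewrite expr2 -normrM zz normr1.
rewrite sqrf_eq1 => /orP[/eqP //|/eqP h1].
by have := normr_ge0 z; rewrite h1 ler0N1.
Qed.

Lemma tr1_1 : \tr (1%:M : 'M[C]_1) = 1.
Proof. by rewrite mxtrace1. Qed.

Lemma conj_prod N (U A B : 'M[C]_N) : adj U *m U = 1%:M ->
  (U *m A *m adj U) *m (U *m B *m adj U) = U *m (A *m B) *m adj U.
Proof. by move=> h; rewrite !mulmxA -[U *m A *m adj U *m U]mulmxA h mulmx1. Qed.

Variables (N : nat) (psi phi : 'cV[C]_N).
Hypotheses (hp : adj psi *m psi = 1%:M) (hq : adj phi *m phi = 1%:M)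
  (h0 : adj phi *m psi = 0).

Lemma h0' : adj psi *m phi = 0.
Proof. by rewrite -[adj psi *m phi]adjK adjM adjK h0 adj0. Qed.

Lemma pp (a b : 'cV[C]_N) : proj_ket a *m proj_ket b = a *m (adj a *m b) *m adj b.
Proof. by rewrite /proj_ket !mulmxA. Qed.

Lemma proj_herm (a : 'cV[C]_N) : adj (proj_ket a) = proj_ket a.
Proof. by rewrite /proj_ket adjM adjK. Qed.

Lemma proj_tr (a : 'cV[C]_N) : adj a *m a = 1%:M -> \tr (proj_ket a) = 1.
Proof. by move=> h; rewrite /proj_ket mxtrace_mulC h tr1_1. Qed.

Lemma proj_density (a : 'cV[C]_N) : adj a *m a = 1%:M -> is_density (proj_ket a).
Proof.
move=> h; split; [exact: proj_herm| |exact: proj_tr].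
move=> v; rewrite /proj_ket !mulmxA -[adj v *m a *m adj a *m v]mulmxA.
have -> : adj a *m v = adj (adj v *m a) by rewrite adjM adjK.
rewrite mxE big_ord1 adjE -normCK; exact: exprn_ge0.
Qed.

Lemma trdist1 : trace_dist (proj_ket psi) (proj_ket phi) = 1.
Proof.
set P := proj_ket psi; set Q := proj_ket phi; set D := P - Q.
have PP : P *m P = P by rewrite /P pp hp mulmx1.
have QQ : Q *m Q = Q by rewrite /Q pp hq mulmx1.
have PQ : P *m Q = 0 by rewrite /P /Q pp h0' mulmx0 mul0mx.
have QP : Q *m P = 0 by rewrite /P /Q pp h0 mulmx0 mul0mx.
have DD : D *m D = P + Q by rewrite /D mulmxBl !mulmxBr PP QQ PQ QP subr0 sub0r opprK.
have DDD : D *m D *m D = D by rewrite DD /D mulmxBr !mulmxDl PP QQ PQ QP addr0 add0r.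
have hD : adj D = D by rewrite /D adjB /P /Q !proj_herm.
have trDD : \tr (D *m D) = 2 by rewrite DD mxtraceD /P /Q !proj_tr.
rewrite /trace_dist -/D tr_abs //.
have Dg := spec_diag hD; case: (spec_herm hD) => _ h1 h2.
set U := spectralmx D in Dg h1 h2; set d := spectral_diag D in Dg.
have e2 : diag_mx d *m diag_mx d = U *m (D *m D) *m adj U by rewrite Dg conj_prod.
have e3 : diag_mx d *m diag_mx d *m diag_mx d = diag_mx d
  by rewrite e2 [in X in _ *m X]Dg conj_prod // DDD -Dg.
have c k : d 0 k * d 0 k * d 0 k = d 0 k.
  have := congr1 (fun Y : 'M[C]_N => Y k k) e3.
  by rewrite /= !mulmx_diag /diag_mx !mxE eqxx !mulr1n ?mxE.
have -> : \sum_k `|d 0 k| = \tr (D *m D).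
  rewrite -[RHS](trace_conj (U := adj U)) ?adjK // -e2 mulmx_diag mxtrace_diag.
  by apply: eq_bigr => k _; rewrite mxE cube_abs.
by rewrite trDD mulVf // pnatr_eq0.
Qed.

End P2.

Section Fin.
Variable C : numClosedFieldType.
Variables (N m : nat) (E : 'I_m -> 'M[C]_N) (O : finType) (M : O -> 'M[C]_N).

Lemma lowb (A : {set O}) (psi phi : 'cV[C]_N) :
  kraus_TP E -> is_measurement M ->
  M_set E M A *m psi = lambda_max (M_set E M A) *: psi ->
  M_set E M A *m phi = lambda_min (M_set E M A) *: phi ->
  adj psi *m psi = 1%:M -> adj phi *m phi = 1%:M ->
  Kval E M A <= tv_dist (qdm E M (proj_ket psi)) (qdm E M (proj_ket phi)).
Proof.
move=> hE hM ep eq hp hq.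
set D := proj_ket psi - proj_ket phi.
have hD : adj D = D by rewrite /D adjB !proj_herm.
have tD : \tr D = 0 by rewrite /D tr_B !proj_tr // subrr.
rewrite tv_x -/D.
apply: le_trans (tv_le (x := fun i => \tr (F E M i *m D))
   (fun i => herm_tr_real (F_herm E M i) hD) (etrans (x_sum D hE hM) tD) A).
rewrite sum_tr_set /D mulmxBr tr_B /proj_ket !mulmxA.
rewrite [\tr (_ *m psi *m _)]mxtrace_mulC [\tr (_ *m phi *m _)]mxtrace_mulC.
rewrite ep eq -!scalemxAr !mxtraceZ hp hq tr1_1 !mulr1.
by [].
Qed.

End Fin.

Lemma adj_delta (C : numClosedFieldType) p q (i : 'I_p) (j : 'I_q) :
  adj (delta_mx i j : 'M[C]_(p, q)) = delta_mx j i.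
Proof. by apply/matrixP => a b; rewrite !mxE rmorph_nat andbC. Qed.

Lemma eigvec (C : numClosedFieldType) n (X : 'M[C]_n) k : adj X = X ->
  X *m adj (row k (spectralmx X)) = spectral_diag X 0 k *: adj (row k (spectralmx X)).
Proof.
move=> hX; case: (spec_herm hX).
set U := spectralmx X; set d := spectral_diag X => hXe h1 h2.
rewrite [in LHS]hXe rowE adjM adj_delta !mulmxA -[adj U *m _ *m U *m adj U]mulmxA h1 mulmx1.
rewrite -mulmxA scalemxAr; congr (_ *m _).
apply/matrixP => i j; rewrite mul_diag_mx !mxE.
by case: eqP => [->|] //=; rewrite ?mulr0 ?mulr1 ?andbF.
Qed.

Lemma rows_orth (C : numClosedFieldType) n (U : 'M[C]_n) a b :
  U *m adj U = 1%:M ->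
  adj (adj (row a U)) *m adj (row b U) = if a == b then 1%:M else 0.
Proof.
move=> h; rewrite adjK !rowE adjM adj_delta !mulmxA -[_ *m U *m adj U]mulmxA h mulmx1.
case: eqP => [->|/eqP ne]; last by rewrite mul_delta_mx_0.
rewrite mul_delta_mx; apply/matrixP => i j; rewrite !ord1 !mxE.
by rewrite !eqxx.
Qed.

Unset Implicit Arguments.

Theorem theorem3 (C : numClosedFieldType) (N : nat) (hN : (0 < N)%N)
  (m : nat) (E : 'I_m -> 'M[C]_N) (O : finType) (M : O -> 'M[C]_N) :
  kraus_TP E -> is_measurement M ->
  (* (1) *)
  is_lipschitz_constant E M (Kformula E M) /\
  (* (2) *)
  (forall (Astar : {set O}) (psi phi : 'cV[C]_N),
     lambda_max (M_set E M Astar) - lambda_min (M_set E M Astar)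
       = Kformula E M ->
     M_set E M Astar *m psi = lambda_max (M_set E M Astar) *: psi ->
     M_set E M Astar *m phi = lambda_min (M_set E M Astar) *: phi ->
     adj psi *m psi = 1%:M -> adj phi *m phi = 1%:M ->
     adj phi *m psi = 0 ->
     tv_dist (qdm E M (proj_ket psi)) (qdm E M (proj_ket phi))
       = Kformula E M * trace_dist (proj_ket psi) (proj_ket phi) /\
     Kformula E M * trace_dist (proj_ket psi) (proj_ket phi) = Kformula E M).
Proof.
move=> hE hM.
have hlip : lipschitz_for E M (Kformula E M).
  by move=> rho sigma hr hs; apply: lip.
split.
  split; [exact: K_ge0 | exact: hlip|].
  move=> K' hK' lK'.
  case: (K_att E M) => [->//|[A ->]].
  set X := M_set E M A.
  have hX : adj X = X by apply: Mset_herm.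
  have [a ea] := lmax_att hN hX.
  have [b eb] := lmin_att hN hX.
  case: (spec_herm hX) => _ h1 _.
  rewrite /Kval -/X.
  case: (eqVneq a b) => [eab|nab].
    by rewrite ea eb eab subrr.
  set psi := adj (row a (spectralmx X)).
  set phi := adj (row b (spectralmx X)).
  have hp : adj psi *m psi = 1%:M by rewrite /psi rows_orth // eqxx.
  have hq : adj phi *m phi = 1%:M by rewrite /phi rows_orth // eqxx.
  have h0 : adj phi *m psi = 0 by rewrite /phi /psi rows_orth // eq_sym (negbTE nab).
  have ep : X *m psi = lambda_max X *: psi by rewrite ea /psi eigvec.
  have eq : X *m phi = lambda_min X *: phi by rewrite eb /phi eigvec.
  apply: le_trans (lowb hE hM ep eq hp hq) _.
  apply: le_trans (lK' _ _ (proj_density hp) (proj_density hq)) _.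
  by rewrite trdist1 // mulr1.
move=> A psi phi hK ep eq hp hq h0.
rewrite trdist1 // mulr1; split => //.
apply/le_anti/andP; split.
  by have := hlip _ _ (proj_density hp) (proj_density hq); rewrite trdist1 // mulr1.
by rewrite -hK; apply: lowb.
Qed.
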